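(* Let $G=(V,E)$ be a finite graph, and let $W,\widehat W$ be maps assigning nonnegative weights to connected subgraphs of $G$, such that for every connected subgraph $C$: $\widehat W(C)=0$ if $W(C)=0$, and $0<\widehat W(C)<W(C)$ if $W(C)>0$. Put $W_{\rm red}=\widehat W$, $W_{\rm blue}=W-\widehat W$, and let $\mu_{G,\mathbf W}$ be the joint measure on pairs $(A,\boldsymbol\sigma)$, $A\subseteq E$, $\boldsymbol\sigma\in\{\mathrm{red},\mathrm{blue}\}^V$, $$\mu_{G,\mathbf W}(A,\boldsymbol\sigma)\propto\Delta(A,\boldsymbol\sigma)\prod_{C\in K(A)}W_{\sigma(C)}(C).$$ Suppose that for each $\boldsymbol\sigma$ with $(A,\boldsymbol\sigma)\in\mathrm{supp}(\mu_{G,\mathbf W})$ for some $A$, $P_{G_{\rm red}(\boldsymbol\sigma),\widehat W}$ is a transition matrix on $\{A_{\rm red}\subseteq E(G_{\rm red}(\boldsymbol\sigma))\}$ with stationary distribution $\phi_{G_{\rm red}(\boldsymbol\sigma),\widehat W}$, and that $P_{G,\widehat W}$ (the case where all vertices are red) is ergodic on $\mathrm{supp}(\phi_{G,\widehat W})$. Define transition matrices on $\mathrm{supp}(\mu_{G,\mathbf W})$ by $$P_{\rm colour}[(A,\boldsymbol\sigma)\to(A',\boldsymbol\sigma')]=\delta_{A,A'}\,\Delta(A,\boldsymbol\sigma')\prod_{C\in K(A)}\frac{W_{\sigma'(C)}(C)}{W(C)},$$ $$P_{\rm bond}[(A,\boldsymbol\sigma)\to(A',\boldsymbol\sigma')]=\delta_{\boldsymbol\sigma,\boldsymbol\sigma'}\,\Delta(A',\boldsymbol\sigma)\,\delta_{A_{\rm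 blue},A'_{\rm blue}}\,P_{G_{\rm red}(\boldsymbol\sigma),\widehat W}[A_{\rm red}\to A'_{\rm red}].$$ Then $P:=P_{\rm colour}P_{\rm bond}$ is ergodic on $\mathrm{supp}(\mu_{G,\mathbf W})$ and has stationary distribution $\mu_{G,\mathbf W}$. (Consequently, since the marginal of $\mu_{G,\mathbf W}$ on $A$ is $\phi_{G,W}$, the $A$-component of this chain samples $\phi_{G,W}$.)
   Context: For a graph $H$ (a subgraph of $G$) and $A\subseteq E(H)$, $K(A)$ denotes the set of connected components of the spanning subgraph $(V(H),A)$, and $\phi_{H,W}(A)\propto\prod_{C\in K(A)}W(C)$ for $A\subseteq E(H)$. For $\boldsymbol\sigma\in\{\mathrm{red},\mathrm{blue}\}^V$, $\Delta(A,\boldsymbol\sigma)$ is the indicator that $\sigma_i=\sigma_j$ for every edge $ij\in A$; when $\Delta(A,\boldsymbol\sigma)=1$, $\sigma(C)$ denotes the common colour of the vertices of the component $C$. $G_{\rm red}(\boldsymbol\sigma)$ and $G_{\rm blue}(\boldsymbol\sigma)$ are the subgraphs of $G$ induced by the red and blue vertices respectively, $A_{\rm red}=A\cap E(G_{\rm red}(\boldsymbol\sigma))$ and $A_{\rm blue}=A\cap E(G_{\rm blue}(\boldsymbol\sigma))$. $\mathrm{supp}$ denotes the set of states of positive probability. ''Ergodic'' means irreducible. *)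

(* Defs.v *)
From HB Require Import structures.
From mathcomp Require Import all_boot all_order all_algebra.
Set Implicit Arguments. Unset Strict Implicit. Unset Printing Implicit Defensive.
Import Order.TTheory GRing.Theory Num.Theory.
Local Open Scope ring_scope.

Section Graph.
Variables (V Ed : finType) (ends : Ed -> V * V).

Definition Eind (U : {set V}) : {set Ed} :=
  [set e | ((ends e).1 \in U) && ((ends e).2 \in U)].

Definition adj (A : {set Ed}) : rel V :=
  fun x y => [exists e in A, (ends e == (x, y)) || (ends e == (y, x))].

Definition compo (A : {set Ed}) (v : V) : {set V} * {set Ed} :=
  let S := [set y | connect (adj A) v y] in
  (S, [set e in A | ((ends e).1 \in S) && ((ends e).2 \in S)]).

(* K(A) for H = G[U], A a subset of E(G[U]) *)
Definition comps (U : {set V}) (A : {set Ed}) : {set {set V} * {set Ed}} :=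
  [set compo A v | v in U].

Definition conn_sub (S : {set V}) (B : {set Ed}) : Prop :=
  S != set0 /\ B \subset Eind S /\
  forall x y, x \in S -> y \in S -> connect (adj B) x y.

Definition phiw (R : realFieldType) (U : {set V})
  (W : {set V} -> {set Ed} -> R) (A : {set Ed}) : R :=
  \prod_(C in comps U A) W C.1 C.2.
Definition phi (R : realFieldType) (U : {set V})
  (W : {set V} -> {set Ed} -> R) (A : {set Ed}) : R :=
  phiw U W A / \sum_(B : {set Ed} | B \subset Eind U) phiw U W B.

(* colours: true = red, false = blue *)
Definition Delta (A : {set Ed}) (s : {ffun V -> bool}) : bool :=
  [forall e in A, s (ends e).1 == s (ends e).2].
Definition colour_of (s : {ffun V -> bool}) (C : {set V} * {set Ed}) : bool :=
  if [pick x in C.1] is Some x then s x else true.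
Definition reds (s : {ffun V -> bool}) : {set V} := [set v | s v].
Definition blues (s : {ffun V -> bool}) : {set V} := [set v | ~~ s v].

Definition Wcol (R : realFieldType) (W Wh : {set V} -> {set Ed} -> R)
  (c : bool) : {set V} -> {set Ed} -> R :=
  if c then Wh else (fun S B => W S B - Wh S B).

Definition state := ({set Ed} * {ffun V -> bool})%type.

Definition muw (R : realFieldType) (W Wh : {set V} -> {set Ed} -> R)
  (x : state) : R :=
  (Delta x.1 x.2)%:R *
  \prod_(C in comps setT x.1) Wcol W Wh (colour_of x.2 C) C.1 C.2.
Definition mu (R : realFieldType) (W Wh : {set V} -> {set Ed} -> R)
  (x : state) : R :=
  muw W Wh x / \sum_(y : state) muw W Wh y.

Definition Pcolour (R : realFieldType) (W Wh : {set V} -> {set Ed} -> R)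
  (x y : state) : R :=
  (x.1 == y.1)%:R * (Delta x.1 y.2)%:R *
  \prod_(C in comps setT x.1)
     (Wcol W Wh (colour_of y.2 C) C.1 C.2 / W C.1 C.2).

(* Pred U a a' = P_{G[U],Wh}[a -> a'] *)
Definition Pbond (R : realFieldType)
  (Pred : {set V} -> {set Ed} -> {set Ed} -> R) (x y : state) : R :=
  let s := x.2 in
  let Er := Eind (reds s) in let Eb := Eind (blues s) in
  (s == y.2)%:R * (Delta y.1 s)%:R * ((x.1 :&: Eb) == (y.1 :&: Eb))%:R *
  Pred (reds s) (x.1 :&: Er) (y.1 :&: Er).

Definition Pchain (R : realFieldType) (W Wh : {set V} -> {set Ed} -> R)
  (Pred : {set V} -> {set Ed} -> {set Ed} -> R) (x y : state) : R :=
  \sum_(z : state) Pcolour W Wh x z * Pbond Pred z y.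

End Graph.

(* Irreducibility ("ergodic") of a matrix P on the set of states [supp]. *)
Definition irreducible_on (R : realFieldType) (T : finType)
  (supp : pred T) (P : T -> T -> R) : Prop :=
  forall x y, supp x -> supp y ->
    connect [rel a b | [&& supp a, supp b & 0 < P a b]] x y.

Definition stochastic_on (R : realFieldType) (T : finType)
  (dom : pred T) (P : T -> T -> R) : Prop :=
  (forall a b, dom a -> dom b -> 0 <= P a b) /\
  (forall a, dom a -> \sum_(b | dom b) P a b = 1).

Definition stationary_on (R : realFieldType) (T : finType)
  (dom : pred T) (P : T -> T -> R) (pi : T -> R) : Prop :=
  forall b, dom b -> \sum_(a | dom a) pi a * P a b = pi b.

(* Main.v *)
Require Import Defs.
From HB Require Import structures.
From mathcomp Require Import all_boot all_order all_algebra.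
Import Order.TTheory GRing.Theory Num.Theory.
Local Open Scope ring_scope.
Set Implicit Arguments. Unset Strict Implicit. Unset Printing Implicit Defensive.

Section Aux.
Variables (R : realFieldType) (V Ed : finType) (ends : Ed -> V * V).

Lemma adj_sym A : symmetric (adj ends A).
Proof.
move=> x y; apply/existsP/existsP => -[e /andP[eA h]]; exists e; by rewrite eA orbC.
Qed.

Lemma adj_edge A a b : adj ends A a b ->
  exists2 e, e \in A & ((ends e).1 == a) && ((ends e).2 == b) || ((ends e).1 == b) && ((ends e).2 == a).
Proof.
move=> /existsP[e /andP[eA /orP[]/eqP h]]; exists e => //; rewrite h /= !eqxx ?orbT //.
Qed.

Lemma connect_restrict A B v y (P : pred V) : P v ->
  (forall a b, P a -> adj ends A a b -> P b && adj ends B a b) ->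
  connect (adj ends A) v y -> P y && connect (adj ends B) v y.
Proof.
move=> Pv H /connectP[p pp ->]; elim: p v Pv pp => [|a p IH] v Pv /=.
  by rewrite Pv connect0.
move=> /andP[h1 h2]; have /andP[Pa hB] := H _ _ Pv h1.
have /andP[-> c] := IH a Pa h2.
by rewrite (connect_trans (connect1 hB) c).
Qed.

Lemma compo_in A v : v \in (compo ends A v).1.
Proof. by rewrite /compo inE connect0. Qed.

Lemma compo_eq A v x : connect (adj ends A) v x -> compo ends A x = compo ends A v.
Proof.
move=> h; rewrite /compo.
have -> : [set y | connect (adj ends A) x y] = [set y | connect (adj ends A) v y].
  by apply/setP => y; rewrite !inE (same_connect (sym_connect_sym (adj_sym A)) h).
by [].
Qed.

Lemma compo_conn A v : conn_sub ends (compo ends A v).1 (compo ends A v).2.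
Proof.
set S := (compo ends A v).1; set B := (compo ends A v).2.
have hB : forall e, (e \in B) = (e \in A) && ((ends e).1 \in S) && ((ends e).2 \in S).
  by move=> e; rewrite /B /compo /= inE andbA.
have cv : forall x, x \in S -> connect (adj ends B) v x.
  move=> x; rewrite /S /compo /= inE => hx.
  suff H : forall a b, a \in S -> adj ends A a b -> (b \in S) && adj ends B a b.
    by case/andP: (@connect_restrict A B v x (fun u => u \in S) (compo_in A v) H hx).
  move=> a b Sa ab.
  have Sb : b \in S.
    move: Sa; rewrite /S /compo /= !inE => Sa; exact: connect_trans Sa (connect1 ab).
  rewrite Sb /=; case: (adj_edge ab) => e eA he.
  apply/existsP; exists e; idtac.
  by case/orP: he => /andP[/eqP h1 /eqP h2]; rewrite hB eA h1 h2 Sa Sb /= -h1 -h2 -surjective_pairing eqxx ?orbT.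
split; first by apply/set0Pn; exists v; exact: compo_in.
split.
  by apply/subsetP => e; rewrite hB /Eind inE -andbA => /and3P[_ -> ->].
move=> x y Sx Sy; apply: connect_trans (cv _ Sy).
by rewrite (sym_connect_sym (adj_sym B)) cv.
Qed.

Lemma colour_compo A s v : Delta ends A s -> colour_of s (compo ends A v) = s v.
Proof.
move=> D; rewrite /colour_of; case: pickP => [x hx|/(_ v)]; last by rewrite compo_in.
move: hx; rewrite /compo /= inE => hx.
suff H : forall a b, s a == s v -> adj ends A a b -> (s b == s v) && adj ends A a b.
  by case/andP: (@connect_restrict A A v x (fun u => s u == s v) (eqxx _) H hx) => /eqP.
move=> a b /eqP sa ab.
rewrite ab andbT; case: (adj_edge ab) => e eA he.
have := forallP D e; rewrite eA /= => /eqP.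
by case/orP: he => /andP[/eqP h1 /eqP h2]; rewrite h1 h2 => h; [rewrite -h sa | rewrite h sa].
Qed.


Definition closedU (A : {set Ed}) (U : {set V}) :=
  forall e, e \in A -> ((ends e).1 \in U) = ((ends e).2 \in U).

Lemma closedU_step A U a b : closedU A U -> a \in U -> adj ends A a b ->
  (b \in U) && adj ends (A :&: Eind ends U) a b.
Proof.
move=> cl aU ab; case: (adj_edge ab) => e eA he.
have cle := cl e eA.
have bU : b \in U.
  case/orP: he => /andP[/eqP h1 /eqP h2]; move: aU cle; rewrite -h1 -h2 => aU cle'; move: aU; by rewrite cle'.
rewrite bU; apply/existsP; exists e; rewrite !inE eA /=.
case/orP: he => /andP[/eqP h1 /eqP h2]; rewrite h1 h2 aU bU /= -h1 -h2 -surjective_pairing eqxx ?orbT //.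
Qed.

Lemma closedU_conn A U v y : closedU A U -> v \in U -> connect (adj ends A) v y ->
  (y \in U) && connect (adj ends (A :&: Eind ends U)) v y.
Proof.
move=> cl vU; apply: (@connect_restrict A _ v y (fun u => u \in U)) => //.
by move=> a b; apply: closedU_step.
Qed.

Lemma adj_sub (A B : {set Ed}) : A \subset B -> subrel (adj ends A) (adj ends B).
Proof.
move=> AB x y /existsP[e /andP[eA h]]; apply/existsP; exists e.
by rewrite (subsetP AB _ eA).
Qed.

Lemma compo_restr A U v : closedU A U -> v \in U ->
  compo ends A v = compo ends (A :&: Eind ends U) v.
Proof.
move=> cl vU.
have cE : forall y, connect (adj ends A) v y = connect (adj ends (A :&: Eind ends U)) v y.
  move=> y; apply/idP/idP => [h|].
    by case/andP: (closedU_conn cl vU h).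
  apply: connect_sub => a b ab; apply: connect1; exact: adj_sub (subsetIl _ _) _ _ ab.
rewrite /compo.
have -> : [set y | connect (adj ends A) v y] = [set y | connect (adj ends (A :&: Eind ends U)) v y].
  by apply/setP => y; rewrite !inE cE.
congr pair; apply/setP => e; rewrite !inE -!cE.
case eA : (e \in A) => //=.
case h1 : (connect (adj ends A) v (ends e).1) => //=; case h2 : (connect (adj ends A) v (ends e).2) => //=; rewrite ?andbF //.
by case/andP: (closedU_conn cl vU h1) => ->; case/andP: (closedU_conn cl vU h2) => ->.
Qed.

Lemma prod_setU (I : finType) (X Y : {set I}) (F : I -> R) : [disjoint X & Y] ->
  \prod_(i in X :|: Y) F i = \prod_(i in X) F i * \prod_(i in Y) F i.
Proof. by move=> d; rewrite -bigU //; apply: eq_bigl => i; rewrite !inE. Qed.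

Lemma closedUC A U : closedU A U -> closedU A (~: U).
Proof. by move=> cl e eA; rewrite !inE cl. Qed.

Lemma prod_comps_split (F : {set V} * {set Ed} -> R) A U : closedU A U ->
  \prod_(C in comps ends setT A) F C =
  \prod_(C in comps ends U (A :&: Eind ends U)) F C *
  \prod_(C in comps ends (~: U) (A :&: Eind ends (~: U))) F C.
Proof.
move=> cl.
have e1 : comps ends U A = comps ends U (A :&: Eind ends U).
  by apply: eq_in_imset => v vU; apply: compo_restr.
have e2 : comps ends (~: U) A = comps ends (~: U) (A :&: Eind ends (~: U)).
  by apply: eq_in_imset => v vU; apply: compo_restr => //; apply: closedUC.
rewrite -e1 -e2 /comps -(setUCr U) imsetU prod_setU //.
rewrite -setI_eq0; apply/eqP/setP => C; rewrite !inE.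
apply/negbTE/negP => /andP[/imsetP[v vU ->] /imsetP[w wU ew]].
have : w \in (compo ends A v).1 by rewrite ew compo_in.
rewrite /compo /= inE => /(closedU_conn cl vU) /andP[wU' _].
by rewrite inE wU' in wU.
Qed.

End Aux.

Section W.
Variables (R : realFieldType) (V Ed : finType) (ends : Ed -> V * V).
Variables (W Wh : {set V} -> {set Ed} -> R).
Hypothesis HW : forall S B, conn_sub ends S B ->
     0 <= W S B /\ (W S B = 0 -> Wh S B = 0) /\
     (0 < W S B -> 0 < Wh S B /\ Wh S B < W S B).

Lemma comps_conn U A C : C \in comps ends U A -> conn_sub ends C.1 C.2.
Proof. by case/imsetP => v _ ->; apply: compo_conn. Qed.

Lemma W_ge0 S B : conn_sub ends S B -> 0 <= W S B.
Proof. by case/HW. Qed.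

Lemma Wcol_ge0 c S B : conn_sub ends S B -> 0 <= Wcol W Wh c S B.
Proof.
move=> /HW [W0 [Wz Wp]]; rewrite /Wcol.
move: W0; rewrite le0r => /orP[/eqP e | p].
  by case: c => /=; rewrite (Wz e) ?e ?subrr.
by have [h1 h2] := Wp p; case: c => /=; rewrite ?subr_ge0 ltW.
Qed.

Lemma Wcol_gt0 c S B : conn_sub ends S B -> 0 < W S B -> 0 < Wcol W Wh c S B.
Proof.
move=> /HW [W0 [Wz Wp]] p; rewrite /Wcol.
by have [h1 h2] := Wp p; case: c => /=; rewrite ?subr_gt0.
Qed.

Lemma Wcol_neq0 c S B : conn_sub ends S B -> Wcol W Wh c S B != 0 -> 0 < W S B.
Proof.
move=> hc; have [W0 [Wz Wp]] := HW hc.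
move: W0; rewrite le0r => /orP[/eqP e | //].
by rewrite /Wcol; case: c => /=; rewrite (Wz e) ?e ?subrr eqxx.
Qed.

Lemma muw_ge0 x : 0 <= muw ends W Wh x.
Proof.
rewrite /muw mulr_ge0 ?ler0n // prodr_ge0 // => C /comps_conn; apply: Wcol_ge0.
Qed.

Lemma muw_neq0P A s : muw ends W Wh (A, s) != 0 <->
  Delta ends A s /\ forall C, C \in comps ends setT A -> 0 < W C.1 C.2.
Proof.
rewrite /muw /=; split.
  rewrite mulf_eq0 negb_or => /andP[D /prodf_neq0 P].
  split; first by move: D; case: (Delta ends A s); rewrite ?eqxx.
  move=> C hC; apply: (Wcol_neq0 (comps_conn hC)); exact: P.
move=> [D P]; rewrite D mul1r; apply/prodf_neq0 => C hC.
by rewrite gt_eqF // Wcol_gt0 ?P //; apply: comps_conn hC.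
Qed.

Lemma muw_le_sum x : muw ends W Wh x <= \sum_y muw ends W Wh y.
Proof. by rewrite (bigD1 x) //= lerDl sumr_ge0 // => y _; apply: muw_ge0. Qed.

Lemma mu_neq0 x : (mu ends W Wh x != 0) = (muw ends W Wh x != 0).
Proof.
rewrite /mu; case: (eqVneq (muw ends W Wh x) 0) => [->|h]; first by rewrite mul0r eqxx.
have Zp : 0 < \sum_y muw ends W Wh y.
  by apply: lt_le_trans (muw_le_sum x); rewrite lt_def h muw_ge0.
by rewrite mulf_neq0 // invr_eq0 gt_eqF.
Qed.

Lemma phiw_ge0 U (X : {set Ed}) : 0 <= phiw ends U Wh X.
Proof.
by rewrite /phiw prodr_ge0 // => C /comps_conn; apply: (Wcol_ge0 true).
Qed.

Lemma phi_neq0 U (X : {set Ed}) : X \subset Eind ends U ->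
  (phi ends U Wh X != 0) = (phiw ends U Wh X != 0).
Proof.
move=> XU; rewrite /phi; case: (eqVneq (phiw ends U Wh X) 0) => [->|h].
  by rewrite mul0r eqxx.
have Zp : 0 < \sum_(B : {set Ed} | B \subset Eind ends U) phiw ends U Wh B.
  apply: lt_le_trans (_ : 0 < phiw ends U Wh X) _; first by rewrite lt_def h phiw_ge0.
  by rewrite (bigD1 X) //= lerDl sumr_ge0 // => y _; apply: phiw_ge0.
by rewrite mulf_neq0 // invr_eq0 gt_eqF.
Qed.

Definition red : {ffun V -> bool} := [ffun _ => true].

Lemma Delta_red A : Delta ends A red.
Proof. by apply/forall_inP => e _; rewrite !ffunE. Qed.

Lemma colour_red (C : {set V} * {set Ed}) : colour_of red C = true.
Proof. by rewrite /colour_of; case: pickP => [x _|_] //; rewrite ffunE. Qed.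

Lemma muw_red B : muw ends W Wh (B, red) = phiw ends setT Wh B.
Proof.
by rewrite /muw /= Delta_red mul1r; apply: eq_bigr => C _; rewrite colour_red.
Qed.

Lemma Delta_sub (A A' : {set Ed}) s : A' \subset A -> Delta ends A s -> Delta ends A' s.
Proof.
move=> sA /forall_inP D; apply/forall_inP => e eA; apply: D; exact: (subsetP sA).
Qed.

Lemma bluesE (s : {ffun V -> bool}) : blues s = ~: reds s.
Proof. by apply/setP => v; rewrite !inE. Qed.

Lemma Delta_closed A s : Delta ends A s -> closedU ends A (reds s).
Proof. by move=> /forall_inP D e eA; rewrite !inE (eqP (D e eA)). Qed.

Lemma muw_decomp A s : Delta ends A s ->
  muw ends W Wh (A, s) =
  phiw ends (reds s) Wh (A :&: Eind ends (reds s)) *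
  \prod_(C in comps ends (blues s) (A :&: Eind ends (blues s))) (W C.1 C.2 - Wh C.1 C.2).
Proof.
move=> D; rewrite /muw /= D mul1r (prod_comps_split _ (Delta_closed D)) -bluesE.
congr (_ * _); apply: eq_bigr => C /imsetP[v vU ->].
  rewrite colour_compo; last by apply: Delta_sub D; apply: subsetIl.
  by move: vU; rewrite inE => ->.
rewrite colour_compo; last by apply: Delta_sub D; apply: subsetIl.
by move: vU; rewrite inE => /negPf ->.
Qed.

Lemma Pcolour_ge0 a z : 0 <= Pcolour ends W Wh a z.
Proof.
rewrite /Pcolour !mulr_ge0 ?ler0n // prodr_ge0 // => C /comps_conn hC.
by rewrite divr_ge0 ?Wcol_ge0 ?W_ge0.
Qed.

Lemma Pcolour_neq0 a z : Pcolour ends W Wh a z != 0 -> muw ends W Wh z != 0.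
Proof.
case: a z => [A0 s0] [A t]; rewrite /Pcolour /= !mulf_eq0 !negb_or.
case/andP => /andP[h1 h2] /prodf_neq0 P.
move: h1 h2; rewrite !pnatr_eq0 !eqb0 !negbK => /eqP e Dt; subst A0.
rewrite /= Dt /=; apply/prodf_neq0 => C hC.
by have := P C hC; rewrite mulf_eq0 negb_or => /andP[].
Qed.

Lemma Pcolour_gt0 A s t : muw ends W Wh (A, t) != 0 -> 0 < Pcolour ends W Wh (A, s) (A, t).
Proof.
case/muw_neq0P => D P; rewrite /Pcolour /= eqxx D !mul1r prodr_gt0 // => C hC.
by rewrite divr_gt0 ?Wcol_gt0 ?P //; apply: comps_conn hC.
Qed.

End W.

Section KI.
Variables (R : realFieldType) (V Ed : finType) (ends : Ed -> V * V).
Variables (W Wh : {set V} -> {set Ed} -> R).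

Lemma compo_mem A v : compo ends A v \in comps ends setT A.
Proof. exact: imset_f (in_setT v). Qed.

Lemma KI A :
  \sum_(s : {ffun V -> bool}) (Delta ends A s)%:R *
     \prod_(C in comps ends setT A) Wcol W Wh (colour_of s C) C.1 C.2 =
  \prod_(C in comps ends setT A) W C.1 C.2.
Proof.
set K := comps ends setT A.
rewrite (eq_bigr (fun C => \sum_(b : bool) Wcol W Wh b C.1 C.2)); last first.
  by move=> C _; rewrite big_bool /= addrC subrK.
rewrite (big_distr_big true).
transitivity (\sum_(s | Delta ends A s)
     \prod_(C in K) Wcol W Wh (colour_of s C) C.1 C.2).
  rewrite [RHS]big_mkcond; apply: eq_bigr => s _.
  by case: (Delta ends A s); rewrite ?mul1r ?mul0r.
pose h (f : {ffun {set V} * {set Ed} -> bool}) : {ffun V -> bool} :=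
  [ffun v => f (compo ends A v)].
pose h' (s : {ffun V -> bool}) : {ffun {set V} * {set Ed} -> bool} :=
  [ffun C => if C \in K then colour_of s C else true].
rewrite (reindex_onto h h'); last first.
  by move=> s D; apply/ffunP => v; rewrite !ffunE compo_mem colour_compo.
have colh : forall f C, C \in K -> colour_of (h f) C = f C.
  move=> f C /imsetP[v _ ->]; rewrite /colour_of.
  case: pickP => [x hx|/(_ v)]; last by rewrite compo_in.
  by rewrite ffunE (compo_eq (v := v) (x := x)) //; move: hx; rewrite /compo /= inE.
apply: eq_big => [f|f /andP[_ /eqP hf]]; last first.
  by apply: eq_bigr => C hC; rewrite colh.
have -> : Delta ends A (h f).
  apply/forall_inP => e eA; rewrite !ffunE (compo_eq (v := (ends e).1) (x := (ends e).2)) //.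
  apply: connect1; apply/existsP; exists e; by rewrite eA -surjective_pairing eqxx.
rewrite /=; apply/eqP/idP => [<-|].
  apply/pffun_onP; split => //.
  apply/subsetP => C; rewrite !inE ffunE; case: ifP => //; by rewrite eqxx.
case/pffun_onP => sup _; apply/ffunP => C; rewrite ffunE; case: ifP => hC.
  exact: colh.
apply/esym/eqP; apply: contraFT hC => nC.
by apply: (subsetP sup); rewrite inE.
Qed.

End KI.

Section Sets.
Variables (V Ed : finType) (ends : Ed -> V * V).

Lemma split_facts (s : {ffun V -> bool}) (A' X : {set Ed}) :
  X \subset Eind ends (reds s) ->
  let Y := X :|: A' :&: Eind ends (blues s) in
  [/\ Y :&: Eind ends (reds s) = X,
      Y :&: Eind ends (blues s) = A' :&: Eind ends (blues s) &
      Delta ends Y s].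
Proof.
move=> XE /=; split.
- apply/setP => e; rewrite !inE; have := subsetP XE e; rewrite !inE.
  by case: (e \in X) (e \in A') (s (ends e).1) (s (ends e).2) => [] [] [] [] //= ->.
- apply/setP => e; rewrite !inE; have := subsetP XE e; rewrite !inE.
  by case: (e \in X) (e \in A') (s (ends e).1) (s (ends e).2) => [] [] [] [] //= ->.
apply/forall_inP => e; rewrite !inE; have := subsetP XE e; rewrite !inE.
by case: (e \in X) (e \in A') (s (ends e).1) (s (ends e).2) => [] [] [] [] //= ->.
Qed.

Lemma Delta_recomb (s : {ffun V -> bool}) (A : {set Ed}) : Delta ends A s ->
  A :&: Eind ends (reds s) :|: A :&: Eind ends (blues s) = A.
Proof.
move=> /forall_inP D; apply/setP => e; rewrite !inE.
case eA: (e \in A) => //=; have := D e eA.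
by case: (s (ends e).1) (s (ends e).2) => [] [].
Qed.

End Sets.

Section Stat.
Variables (R : realFieldType) (V Ed : finType) (ends : Ed -> V * V).
Variables (W Wh : {set V} -> {set Ed} -> R).
Variable (Pred : {set V} -> {set Ed} -> {set Ed} -> R).
Hypothesis HW : forall S B, conn_sub ends S B ->
     0 <= W S B /\ (W S B = 0 -> Wh S B = 0) /\
     (0 < W S B -> 0 < Wh S B /\ Wh S B < W S B).
Hypothesis H2 : forall A s, mu ends W Wh (A, s) != 0 ->
     let U := reds s in
     stochastic_on (fun a : {set Ed} => a \subset Eind ends U) (Pred U) /\
     stationary_on (fun a : {set Ed} => a \subset Eind ends U) (Pred U) (phi ends U Wh).

Lemma sum_state (F : state V Ed -> R) : \sum_x F x = \sum_A \sum_s F (A, s).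
Proof. by rewrite pair_bigA; apply: eq_bigr => -[]. Qed.

Lemma statC z : \sum_a muw ends W Wh a * Pcolour ends W Wh a z = muw ends W Wh z.
Proof.
case: z => A t; rewrite sum_state (bigD1 A) //=.
rewrite [X in _ + X]big1 ?addr0 => [|A0 ne]; last first.
  by apply: big1 => s _; rewrite /Pcolour /= (negPf ne) !mul0r mulr0.
rewrite /Pcolour /= eqxx mul1r -big_distrl /=.
have -> : \sum_s muw ends W Wh (A, s) = \prod_(C in comps ends setT A) W C.1 C.2.
  by rewrite -(@KI R V Ed ends W Wh A).
rewrite /muw /=; case: (Delta ends A t); rewrite ?mul0r ?mulr0 // !mul1r -big_split /=.
apply: eq_bigr => C hC; have cs := comps_conn hC.
have [W0 [Wz Wp]] := HW cs.
case: (eqVneq (W C.1 C.2) 0) => [e|nz]; last by rewrite mulrC divfK.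
by rewrite e mul0r /Wcol; case: (colour_of t C); rewrite /= (Wz e) ?e ?subrr.
Qed.

Lemma stat_w U (Pr : {set Ed} -> {set Ed} -> R) :
  stationary_on (fun a : {set Ed} => a \subset Eind ends U) Pr (phi ends U Wh) ->
  forall b : {set Ed}, b \subset Eind ends U ->
  \sum_(a : {set Ed} | a \subset Eind ends U) phiw ends U Wh a * Pr a b = phiw ends U Wh b.
Proof.
move=> st b hb; have := st b hb; rewrite /phi.
set Z := \sum_(B : {set Ed} | B \subset Eind ends U) phiw ends U Wh B.
case: (eqVneq Z 0) => [Z0|Zn] e.
  have all0 := psumr_eq0P (fun B _ => phiw_ge0 HW U B) Z0.
  by rewrite all0 // big1 // => a ha; rewrite all0 // mul0r.
apply: (mulIf (invr_neq0 Zn)); rewrite -e big_distrl /=.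
by apply: eq_bigr => a _; rewrite mulrAC.
Qed.


Lemma statB b : \sum_z muw ends W Wh z * Pbond ends Pred z b = muw ends W Wh b.
Proof.
case: b => A' s.
rewrite sum_state (eq_bigr (fun A => muw ends W Wh (A,s) * Pbond ends Pred (A,s) (A',s))); last first.
  move=> A _; rewrite (bigD1 s) //= [X in _ + X]big1 ?addr0 // => s0 ne.
  by rewrite /Pbond /= (negPf ne) !mul0r mulr0.
set Er := Eind ends (reds s); set Eb := Eind ends (blues s).
have Pb : forall A, Pbond ends Pred (A,s) (A',s) = (Delta ends A' s)%:R *
   (A :&: Eb == A' :&: Eb)%:R * Pred (reds s) (A :&: Er) (A' :&: Er).
  by move=> A; rewrite /Pbond /= eqxx mul1r.
rewrite (eq_bigr _ (fun A _ => congr1 (fun x => muw ends W Wh (A, s) * x) (Pb A))).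
case DA': (Delta ends A' s); last first.
  by rewrite big1 /muw /= ?DA' ?mul0r // => A _; rewrite !mul0r mulr0.
case: (boolP [exists A0, muw ends W Wh (A0, s) != 0]) => [/existsP[A0 h0] | /existsPn h0]; last first.
  rewrite big1 => [|A _]; first by rewrite (eqP (negPn (h0 A'))).
  by rewrite (eqP (negPn (h0 A))) mul0r.
have h0' : mu ends W Wh (A0, s) != 0 by rewrite (mu_neq0 HW).
have [_ st] := H2 h0'.
transitivity (\sum_(A | Delta ends A s && (A :&: Eb == A' :&: Eb))
    muw ends W Wh (A, s) * Pred (reds s) (A :&: Er) (A' :&: Er)).
  rewrite [RHS]big_mkcond; apply: eq_bigr => A _.
  have [DA|DA] := boolP (Delta ends A s).
    by rewrite /=; case: (_ == _); rewrite ?mul1r ?mul0r ?mulr0.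
  by rewrite /muw /= (negPf DA) !mul0r.
rewrite (reindex_onto (fun X : {set Ed} => X :|: A' :&: Eb) (fun A => A :&: Er)) /=; last first.
  by move=> A /andP[DA /eqP e]; rewrite -e; exact: Delta_recomb DA.
transitivity (\sum_(X : {set Ed} | X \subset Er) phiw ends (reds s) Wh X *
   \prod_(C in comps ends (blues s) (A' :&: Eb)) (W C.1 C.2 - Wh C.1 C.2) *
   Pred (reds s) X (A' :&: Er)).
  apply: eq_big => [X|X hX].
    apply/idP/idP => [/andP[_ /eqP <-]|XE]; first exact: subsetIr.
    by have [e1 e2 D] := split_facts A' XE; rewrite D e1 e2 !eqxx.
  move/andP: hX => [/andP[D _] /eqP e1].
  have XE : X \subset Er by rewrite -e1 subsetIr.
  have [e1' e2 _] := split_facts A' XE.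
  by rewrite (muw_decomp W Wh D) e1' e2.
rewrite (eq_bigr (fun X => \prod_(C in comps ends (blues s) (A' :&: Eb)) (W C.1 C.2 - Wh C.1 C.2) *
   (phiw ends (reds s) Wh X * Pred (reds s) X (A' :&: Er)))); last first.
  by move=> X _; rewrite mulrAC mulrC.
rewrite -big_distrr /= (stat_w st) ?subsetIr //.
by rewrite (muw_decomp W Wh DA') mulrC.
Qed.

End Stat.

Lemma connect_map (T T' : finType) (e : rel T) (e' : rel T') (f : T -> T') x y :
  (forall a b, e a b -> e' (f a) (f b)) -> connect e x y -> connect e' (f x) (f y).
Proof.
move=> H /connectP[p pp ->]; elim: p x pp => [|a p IH] x /=; first by rewrite connect0.
by move=> /andP[h1 h2]; apply: connect_trans (connect1 (H _ _ h1)) (IH _ h2).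
Qed.

Lemma sum_neq0_ex (R : realFieldType) (I : finType) (P : pred I) (F : I -> R) :
  \sum_(i | P i) F i != 0 -> exists2 i, P i & F i != 0.
Proof.
move=> h; have : [exists i, P i && (F i != 0)].
  apply: contraR h => /existsPn H; rewrite big1 // => i Pi.
  by apply/eqP; move: (H i); rewrite Pi /= negbK.
by case/existsP => i /andP[]; exists i.
Qed.

Section Irr.
Variables (R : realFieldType) (V Ed : finType) (ends : Ed -> V * V).
Variables (W Wh : {set V} -> {set Ed} -> R).
Variable (Pred : {set V} -> {set Ed} -> {set Ed} -> R).
Hypothesis HW : forall S B, conn_sub ends S B ->
     0 <= W S B /\ (W S B = 0 -> Wh S B = 0) /\
     (0 < W S B -> 0 < Wh S B /\ Wh S B < W S B).
Hypothesis H2 : forall A s, mu ends W Wh (A, s) != 0 ->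
     let U := reds s in
     stochastic_on (fun a : {set Ed} => a \subset Eind ends U) (Pred U) /\
     stationary_on (fun a : {set Ed} => a \subset Eind ends U) (Pred U) (phi ends U Wh).

Lemma redsT : reds (red V) = setT.
Proof. by apply/setP => v; rewrite !inE ffunE. Qed.

Lemma bluesT : blues (red V) = set0.
Proof. by apply/setP => v; rewrite !inE ffunE. Qed.

Lemma EindT : Eind ends setT = setT.
Proof. by apply/setP => e; rewrite !inE. Qed.

Lemma Eind0 : Eind ends set0 = set0.
Proof. by apply/setP => e; rewrite !inE. Qed.

Lemma Pbond_red B B' : Pbond ends Pred (B, red V) (B', red V) = Pred setT B B'.
Proof.
by rewrite /Pbond /= eqxx Delta_red redsT bluesT EindT Eind0 !setIT !setI0 eqxx !mul1r.
Qed.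

Lemma term_ge0 a z b : 0 <= Pcolour ends W Wh a z * Pbond ends Pred z b.
Proof.
case: (eqVneq (Pcolour ends W Wh a z) 0) => [->|nz]; first by rewrite mul0r.
apply: mulr_ge0; first exact: Pcolour_ge0.
have := Pcolour_neq0 nz; case: z {nz} => A s hz.
have hz' : mu ends W Wh (A, s) != 0 by rewrite (mu_neq0 HW).
have [[nn _] _] := H2 hz'.
by rewrite /Pbond /= !mulr_ge0 ?ler0n // nn ?subsetIr.
Qed.

Lemma Pchain_ge a z b : Pcolour ends W Wh a z * Pbond ends Pred z b <= Pchain ends W Wh Pred a b.
Proof.
by rewrite /Pchain (bigD1 z) //= lerDl sumr_ge0 // => i _; apply: term_ge0.
Qed.

Lemma phiT_neq0 B : (phi ends setT Wh B != 0) = (muw ends W Wh (B, red V) != 0).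
Proof. by rewrite (phi_neq0 HW) ?EindT ?subsetT // muw_red. Qed.

Lemma muw_tored A s : muw ends W Wh (A, s) != 0 -> muw ends W Wh (A, red V) != 0.
Proof.
by case/(muw_neq0P HW) => _ P; apply/(muw_neq0P HW); split => //; apply: Delta_red.
Qed.

Lemma phi_ge0 U (X : {set Ed}) : 0 <= phi ends U Wh X.
Proof.
by rewrite /phi divr_ge0 ?(phiw_ge0 HW) // sumr_ge0 // => B _; apply: (phiw_ge0 HW).
Qed.

Hypothesis H3 : irreducible_on (fun a : {set Ed} => phi ends setT Wh a != 0) (Pred setT).

Lemma irr : irreducible_on (fun x : state V Ed => mu ends W Wh x != 0) (Pchain ends W Wh Pred).
Proof.
move=> [A s] [B t]; rewrite !(mu_neq0 HW) => hx hy.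
have hAr := muw_tored hx.
have hAr' : mu ends W Wh (A, red V) != 0 by rewrite (mu_neq0 HW).
have [[nn sum1] stA] := H2 hAr'; rewrite /= redsT EindT in nn sum1 stA.
have [b1 _ hb1] : exists2 b1 : {set Ed}, b1 \subset setT & Pred setT A b1 != 0.
  by apply: sum_neq0_ex; rewrite sum1 ?subsetT // oner_eq0.
have pb1 : 0 < Pred setT A b1 by rewrite lt_def hb1 nn ?subsetT.
have phA : 0 < phi ends setT Wh A by rewrite lt_def phiT_neq0 hAr phi_ge0.
have phb1 : phi ends setT Wh b1 != 0.
  rewrite -(stA b1 (subsetT _)) gt_eqF //.
  apply: lt_le_trans (_ : 0 < phi ends setT Wh A * Pred setT A b1) _; first exact: mulr_gt0.
  rewrite (bigD1 A) ?subsetT //= lerDl sumr_ge0 // => a _.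
  by rewrite mulr_ge0 ?phi_ge0 ?nn ?subsetT.
have step1 : connect [rel a b | [&& mu ends W Wh a != 0, mu ends W Wh b != 0 &
    0 < Pchain ends W Wh Pred a b]] (A, s) (b1, red V).
  apply: connect1; rewrite /= !(mu_neq0 HW) hx -phiT_neq0 phb1 /=.
  apply: lt_le_trans (Pchain_ge _ (A, red V) _).
  by rewrite Pbond_red mulr_gt0 // (Pcolour_gt0 HW).
have hy' : mu ends W Wh (B, t) != 0 by rewrite (mu_neq0 HW).
have DB : Delta ends B t by case/(muw_neq0P HW): hy.
have [[nnt _] stt] := H2 hy'; rewrite /= in nnt stt.
set Er := Eind ends (reds t) in nnt stt *; set Eb := Eind ends (blues t).
have := hy; rewrite (muw_decomp W Wh DB) mulf_eq0 negb_or => /andP[hr hb].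
have st := stat_w HW stt (subsetIr B Er).
have : \sum_(a : {set Ed} | a \subset Er) phiw ends (reds t) Wh a * Pred (reds t) a (B :&: Er) != 0.
  by rewrite st.
case/sum_neq0_ex => X XE; rewrite mulf_eq0 negb_or => /andP[hX hP].
have [e1 e2 D0] := split_facts B XE.
set B0 := X :|: B :&: Eb in e1 e2 D0.
have hB0 : muw ends W Wh (B0, t) != 0.
  by rewrite (muw_decomp W Wh D0) e1 e2 mulf_neq0.
have hB0r := muw_tored hB0.
have step2 : connect [rel a b | [&& mu ends W Wh a != 0, mu ends W Wh b != 0 &
    0 < Pchain ends W Wh Pred a b]] (b1, red V) (B0, red V).
  apply: (connect_map (f := fun a => (a, red V))) (H3 phb1 _); last by rewrite phiT_neq0.
  move=> a b /= /and3P[pa pb pab].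
  rewrite !(mu_neq0 HW) -!phiT_neq0 pa pb /=.
  apply: lt_le_trans (Pchain_ge _ (a, red V) _).
  by rewrite Pbond_red mulr_gt0 // (Pcolour_gt0 HW) // -phiT_neq0.
have step3 : connect [rel a b | [&& mu ends W Wh a != 0, mu ends W Wh b != 0 &
    0 < Pchain ends W Wh Pred a b]] (B0, red V) (B, t).
  apply: connect1; rewrite /= !(mu_neq0 HW) hB0r hy /=.
  apply: lt_le_trans (Pchain_ge _ (B0, t) _).
  rewrite mulr_gt0 // ?(Pcolour_gt0 HW) //.
  rewrite /Pbond /= eqxx DB -/Er -/Eb e1 e2 eqxx !mul1r.
  by rewrite lt_def hP nnt // subsetIr.
exact: connect_trans step1 (connect_trans step2 step3).
Qed.

End Irr.

Lemma stat_chain (R : realFieldType) (V Ed : finType) (ends : Ed -> V * V)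
  (W Wh : {set V} -> {set Ed} -> R)
  (Pred : {set V} -> {set Ed} -> {set Ed} -> R) :
  (forall S B, conn_sub ends S B ->
     0 <= W S B /\ (W S B = 0 -> Wh S B = 0) /\
     (0 < W S B -> 0 < Wh S B /\ Wh S B < W S B)) ->
  (forall A s, mu ends W Wh (A, s) != 0 ->
     let U := reds s in
     stochastic_on (fun a : {set Ed} => a \subset Eind ends U) (Pred U) /\
     stationary_on (fun a : {set Ed} => a \subset Eind ends U) (Pred U) (phi ends U Wh)) ->
  stationary_on (fun x : state V Ed => true) (Pchain ends W Wh Pred) (mu ends W Wh).
Proof.
move=> HW H2 b _; rewrite /mu /Pchain.
set Z := \sum_y muw ends W Wh y.
transitivity (\sum_z (\sum_a muw ends W Wh a * Pcolour ends W Wh a z) * Pbond ends Pred z b / Z); last first.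
  rewrite -big_distrl /=; congr (_ / _); rewrite -[RHS](statB HW H2 b).
  by apply: eq_bigr => z _; rewrite (statC HW).
rewrite [RHS](eq_bigr (fun z => \sum_a muw ends W Wh a * Pcolour ends W Wh a z * Pbond ends Pred z b / Z)) => [|z _]; last first.
  by rewrite !big_distrl.
rewrite [RHS]exchange_big; apply: eq_bigr => a _; rewrite big_distrr /=.
by apply: eq_bigr => z _; rewrite mulrAC !mulrA.
Qed.

Unset Implicit Arguments.
Theorem proposition3 (R : realFieldType) (V Ed : finType) (ends : Ed -> V * V)
  (W Wh : {set V} -> {set Ed} -> R)
  (Pred : {set V} -> {set Ed} -> {set Ed} -> R) :
  (forall S B, conn_sub ends S B ->
     0 <= W S B /\ (W S B = 0 -> Wh S B = 0) /\
     (0 < W S B -> 0 < Wh S B /\ Wh S B < W S B)) ->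
  (forall A s, mu ends W Wh (A, s) != 0 ->
     let U := reds s in
     stochastic_on (fun a : {set Ed} => a \subset Eind ends U) (Pred U) /\
     stationary_on (fun a : {set Ed} => a \subset Eind ends U) (Pred U) (phi ends U Wh)) ->
  irreducible_on (fun a : {set Ed} => phi ends setT Wh a != 0) (Pred setT) ->
  irreducible_on (fun x : state V Ed => mu ends W Wh x != 0) (Pchain ends W Wh Pred) /\
  stationary_on (fun x : state V Ed => true) (Pchain ends W Wh Pred) (mu ends W Wh).
Proof.
move=> HW H2 H3; split; first exact: irr HW H2 H3.
exact: stat_chain HW H2.
Qed.
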